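(* Let $g_1,\dots,g_r\in\mathbb R[X_1,\dots,X_n]$ satisfy $1-\|\mathbf X\|_2^2\in\mathcal Q(\mathbf g)$ and $\|g_i\|\le\tfrac12$, with $S=\mathcal S(\mathbf g)\ne\emptyset$. Let $f\in\mathbb R[\mathbf X]$ with $f^*=\min_S f>0$, let $A=\{x\in[-1,1]^n: f(x)\le\frac{3f^*}{4}\}$, and let $0<\delta\le 1$ be such that $G(x)\ge\delta$ for all $x\in A$. Let $k>0$, $m\in\mathbb N$ and let $h_{k,m}\in\mathbb R[T]$ be a univariate polynomial of degree $m$ such that: $1-\frac1k\le h_{k,m}(t)\le1+\frac1k$ for $t\in[-1,-\delta]$; $h_{k,m}(t)\le\frac2k$ for $t\in[0,1]$; $0\le h_{k,m}(t)\le1+\frac1k$ for $t\in[-1,1]$. Let $s>0$. If $$s>\frac{6\|f\|}{\delta},\qquad k>\frac{2r-2}{\delta}+1,\qquad k>\frac{4rs}{f^*},$$ then $p=f-s\sum_{i=1}^r h_{k,m}(g_i)\,g_i$ satisfies $p\ge\frac{f^*}{2}$ on $[-1,1]^n$.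
   Context: $\Sigma^2$ sums of squares, $\mathcal S(\mathbf g)=\{x:g_i(x)\ge0\ \forall i\}$, $\mathcal Q(\mathbf g)=\Sigma^2+\sum_i\Sigma^2g_i$, $\|h\|=\max_{[-1,1]^n}|h|$, $\|\mathbf X\|_2^2=\sum X_i^2$, $G(x)=|\min\{g_1(x),\dots,g_r(x),0\}|$. *)

(* Defs.v *)
From HB Require Import structures.
From mathcomp Require Import all_boot all_order all_algebra.
From mathcomp Require Import reals.
From mathcomp Require Import mpoly.
Set Implicit Arguments. Unset Strict Implicit. Unset Printing Implicit Defensive.
Import Order.TTheory GRing.Theory Num.Theory.
Local Open Scope ring_scope.

Section Defs.
Variables (R : realType) (n r : nat).

Definition is_sos (p : {mpoly R[n]}) : Prop :=
  exists s : seq {mpoly R[n]}, p = \sum_(q <- s) q ^+ 2.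

Definition in_qmodule (g : 'I_r -> {mpoly R[n]}) (p : {mpoly R[n]}) : Prop :=
  exists (s0 : {mpoly R[n]}) (s : 'I_r -> {mpoly R[n]}),
    is_sos s0 /\ (forall i, is_sos (s i)) /\ p = s0 + \sum_(i < r) s i * g i.

Definition in_cube (x : 'I_n -> R) : Prop := forall i, -1 <= x i <= 1.

Definition in_S (g : 'I_r -> {mpoly R[n]}) (x : 'I_n -> R) : Prop :=
  forall i, 0 <= (g i).@[x].

(* ||h|| = max_{[-1,1]^n} |h| (a max, realised as the supremum) *)
Definition supnorm (h : {mpoly R[n]}) : R :=
  sup (fun t : R => exists x, in_cube x /\ t = `|h.@[x]|).

Definition sqnormX : {mpoly R[n]} := \sum_(i < n) 'X_i ^+ 2.

Definition Gfun (g : 'I_r -> {mpoly R[n]}) (x : 'I_n -> R) : R :=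
  `| \big[Num.min/0]_(i < r) (g i).@[x] |.

End Defs.

(* Main.v *)
Require Import Defs.
From HB Require Import structures.
From mathcomp Require Import all_boot all_order all_algebra.
From mathcomp Require Import reals.
From mathcomp Require Import mpoly.
From mathcomp Require Import classical_sets.
Import Order.TTheory GRing.Theory Num.Theory.
Set Implicit Arguments. Unset Strict Implicit.
Local Open Scope ring_scope.

Lemma eval_bound (R : realType) (n : nat) (q : {mpoly R[n]}) (x : 'I_n -> R) :
  in_cube x -> `|q.@[x]| <= \sum_(m <- msupp q) `|q@_m|.
Proof.
move=> hx; rewrite mevalE; apply: le_trans (ler_norm_sum _ _ _) _.
apply: ler_sum => m _; rewrite normrM -[X in _ <= X]mulr1 ler_wpM2l //.
rewrite normr_prod.
suff: 0 <= \prod_(i < n) `|x i ^+ m i| <= 1 by case/andP.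
apply: (big_ind (fun y => 0 <= y <= 1)); first by rewrite ler01 lexx.
  move=> a b /andP[a0 a1] /andP[b0 b1].
  by rewrite mulr_ge0 //= -[1]mulr1 ler_pM.
move=> i _; rewrite normrX exprn_ge0 //= exprn_ile1 //.
by rewrite ler_norml; exact: hx.
Qed.

Lemma le_supnorm (R : realType) (n : nat) (q : {mpoly R[n]}) (x : 'I_n -> R) :
  in_cube x -> `|q.@[x]| <= supnorm q.
Proof.
move=> hx; apply: ub_le_sup; last by exists x.
exists (\sum_(m <- msupp q) `|q@_m|) => t [y [hy ->]].
exact: eval_bound.
Qed.

From mathcomp Require Import lra.

Lemma sos_ge0 (R : realType) (n : nat) (p : {mpoly R[n]}) x :
  is_sos p -> 0 <= p.@[x].
Proof.
case=> sq ->; rewrite rmorph_sum /=; apply: sumr_ge0 => q _.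
by rewrite rmorphXn /= sqr_ge0.
Qed.

Lemma S_cube (R : realType) (n r : nat) (g : 'I_r -> {mpoly R[n]}) x :
  in_qmodule g (1 - sqnormX R n) -> in_S g x -> in_cube x.
Proof.
case=> s0 [sf [hs0 [hsf he]]] hx i.
have : 0 <= (1 - sqnormX R n).@[x].
  rewrite he mevalD rmorph_sum /= addr_ge0 ?sos_ge0 //.
  apply: sumr_ge0 => j _; rewrite mevalM; apply: mulr_ge0; [exact: sos_ge0 | exact: hx].
rewrite mevalB meval1 /sqnormX rmorph_sum /=.
rewrite (bigD1 i) //= rmorphXn /= mevalXU.
have : 0 <= \sum_(j < n | j != i) ('X_j ^+ 2 : {mpoly R[n]}).@[x].
  by apply: sumr_ge0 => j _; rewrite rmorphXn /= sqr_ge0.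
move: (\sum_(j < n | j != i) _) => S hS h.
apply/andP; split; nra.
Qed.

Lemma Gfun_neg (R : realType) (n r : nat) (g : 'I_r -> {mpoly R[n]}) x delta :
  0 < delta -> delta <= Gfun g x -> exists j, (g j).@[x] <= - delta.
Proof.
move=> d0; rewrite /Gfun.
set M := \big[Num.min/0]_(i < r) _.
have M0 : M <= 0.
  rewrite /M; apply: (big_rec (fun y => y <= 0)) => //.
  by move=> i y _ hy; rewrite ge_min hy orbT.
rewrite ler0_norm // => hd.
case: (boolP [exists j, (g j).@[x] <= - delta]) => [/existsP//|/existsP hne].
exfalso.
have : - delta < M.
  rewrite /M; apply: (big_ind (fun y => - delta < y)).
  - by rewrite oppr_lt0.
  - by move=> a b ha hb; rewrite lt_min ha.
  move=> j _; rewrite ltNge; apply/negP => hj; apply: hne; by exists j.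
lra.
Qed.

Theorem mainTheorem8 (R : realType) (n r : nat) (g : 'I_r -> {mpoly R[n]})
  (f : {mpoly R[n]}) (fstar delta k : R) (m : nat) (h : {poly R}) (s : R) :
  in_qmodule g (1 - sqnormX R n) ->
  (forall i, supnorm (g i) <= 1 / 2) ->
  (exists x, in_S g x) ->
  (exists2 x, in_S g x & f.@[x] = fstar) ->
  (forall x, in_S g x -> fstar <= f.@[x]) ->
  0 < fstar ->
  0 < delta -> delta <= 1 ->
  (forall x, in_cube x -> f.@[x] <= 3 * fstar / 4 -> delta <= Gfun g x) ->
  0 < k ->
  size h = m.+1 ->
  (forall t, -1 <= t <= - delta -> 1 - 1 / k <= h.[t] <= 1 + 1 / k) ->
  (forall t, 0 <= t <= 1 -> h.[t] <= 2 / k) ->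
  (forall t, -1 <= t <= 1 -> 0 <= h.[t] <= 1 + 1 / k) ->
  0 < s ->
  s > 6 * supnorm f / delta ->
  k > (2 * r%:R - 2) / delta + 1 ->
  k > 4 * r%:R * s / fstar ->
  forall x, in_cube x ->
    fstar / 2 <= f.@[x] - s * \sum_(i < r) h.[(g i).@[x]] * (g i).@[x].
Proof.
move=> hQ hgn _ [x0 hx0 fx0] _ fs0 d0 d1 hA k0 _ hneg hpos hall s0 Hs Hk1 Hk2 x hx.
rewrite !div1r in hneg hall.
set a := k^-1 in hneg hpos hall.
have ak : a * k = 1 by rewrite mulVf ?gt_eqF.
have a0 : 0 < a by rewrite invr_gt0.

rewrite ltr_pdivrMr // in Hs.
have Hk1' : (2 * r%:R - 2) / delta < k - 1 by lra.
rewrite ltr_pdivrMr // in Hk1'.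
rewrite ltr_pdivrMr // in Hk2.
have hfx : - supnorm f <= f.@[x].
  by have := le_supnorm f hx; rewrite ler_norml => /andP[].
have hfF : fstar <= supnorm f.
  have := le_supnorm f (S_cube hQ hx0); rewrite fx0 ler_norml => /andP[_].
  done.
have hg : forall i, -1/2 <= (g i).@[x] <= 1/2.
  move=> i; have := le_trans (le_supnorm _ hx) (hgn i); rewrite ler_norml; lra.
have hterm : forall i, h.[(g i).@[x]] * (g i).@[x] <= a.
  move=> i; have := hg i; move: ((g i).@[x]) => t /andP[t1 t2].
  have tc : -1 <= t <= 1 by apply/andP; split; lra.
  have /andP[h0 _] := hall t tc.
  have [t0|t0] := leP 0 t.
    have tp : 0 <= t <= 1 by apply/andP; split; lra.
    have hp := hpos t tp.
    nra.
  nra.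
have rge0 : 0 <= r%:R :> R by [].
have [fle|fgt] := leP (f.@[x]) (3 * fstar / 4); last first.
  have hsum : \sum_(i < r) h.[(g i).@[x]] * (g i).@[x] <= r%:R * a.
    apply: le_trans (ler_sum _ (fun i _ => hterm i)) _.
    by rewrite sumr_const card_ord mulr_natl.
  have : fstar > 4 * r%:R * s * a.
    have hp : 0 < (k * fstar - 4 * r%:R * s) * a by apply: mulr_gt0 => //; lra.
    nra.
  nra.
have [j hj] := Gfun_neg d0 (hA x hx fle).
have hr1 : 1 <= r%:R :> R.
  by rewrite ler1n; exact: (leq_ltn_trans (leq0n j) (ltn_ord j)).
have hk1 : 1 < k by nra.
have ha1 : a < 1 by nra.
have hsd : s * delta <= s by nra.
have hk24 : 24 < k.
  have : 4 * s < k * fstar by nra.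
  move=> h4; have : 24 * fstar < k * fstar by lra.
  by rewrite ltr_pM2r.
have ha24 : a * 24 < 1 by nra.
have hgj := hg j.
have tc : -1 <= (g j).@[x] <= - delta by apply/andP; split; lra.
have /andP[hj1 _] := hneg _ tc.
have hjt : h.[(g j).@[x]] * (g j).@[x] <= - ((1 - a) * delta) by nra.
have hrest : \sum_(i < r | i != j) h.[(g i).@[x]] * (g i).@[x] <= (r%:R - 1) * a.
  apply: le_trans (ler_sum _ (fun i _ => hterm i)) _.
  have e : \sum_(i < r) a = a + \sum_(i < r | i != j) a by rewrite (bigD1 j).
  rewrite sumr_const card_ord -mulr_natl in e.
  lra.
rewrite (bigD1 j) //=.
move: (\sum_(i < r | i != j) _) hrest => S hS.
have hka : (2 * r%:R - 2) * a < (1 - a) * delta.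
  have hp : 0 < ((k - 1) * delta - (2 * r%:R - 2)) * a by apply: mulr_gt0 => //; lra.
  nra.
set D := (1 - a) * delta - (r%:R - 1) * a.
have hD : delta * 23 / 48 <= D by rewrite /D; nra.
have hsD : s * (delta * 23 / 48) <= s * D by rewrite ler_pM2l.
nra.
Qed.
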